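(* Let $a$ be a nonzero integer, let $(L_n)_{n\ge0}$ be the Lucas sequence $L(a,1)$, let $p\ge3$ be a prime with $\alpha_L(p)>2$, let $D=a^2+4$, and let $\lambda_1=\frac{a+\sqrt D}{2}$, $\lambda_2=\frac{a-\sqrt D}{2}$. Suppose that $p^2\mid D$, or that $(\lambda_2/\lambda_1)^l-1$ is not divisible by $\pi^2$, where $l$ is the order of $\lambda_2/\lambda_1$ modulo $\pi$. Then $$\overline{\left\{\frac{L_{n+\alpha_L(p)}}{L_n}\right\}_{n}}\ \cup\ \overline{\left\{\frac{L_{n+\alpha_L(p)-2}}{L_n}\right\}_{n}}=\mathbf{Q}_p.$$ In particular, if $(F_n)$ is the Fibonacci sequence and $p\ge3$ is not a Wall–Sun–Sun prime, then $$\overline{\left\{\frac{F_{n+\alpha_F(p)}}{F_n}\right\}_{n}}\ \cup\ \overline{\left\{\frac{F_{n+\alpha_F(p)-2}}{F_n}\right\}_{n}}=\mathbf{Q}_p.$$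
   Context: The Lucas sequence $L(a,b)$ is defined by $L_0=0$, $L_1=1$, $L_n=aL_{n-1}+bL_{n-2}$ ($n\ge2$); the Fibonacci sequence is $L(1,1)$. The sets in the claim range over $n\ge0$ with $L_n\ne0$ (resp. $F_n\neq 0$), and the bars denote closure in $\mathbf{Q}_p$. The rank of appearance $\alpha_L(p)$ is the least $n\ge1$ with $p\mid L_n$. A prime $p$ is a Wall–Sun–Sun prime if $p^2\mid F_{\alpha_F(p)}$. Here $\pi$ is a uniformizer of $\mathbf{Q}_p(\sqrt D)$ (with $\pi=p$ when $\mathbf{Q}_p(\sqrt D)=\mathbf{Q}_p$ or is unramified over $\mathbf{Q}_p$; $|\pi|_p=p^{-1/2}$ when ramified); divisibility and congruences are in the ring of integers of $\mathbf{Q}_p(\sqrt D)$, and the order of a unit $u$ modulo $\pi$ is the least $l\ge1$ with $u^l\equiv 1\pmod\pi$. *)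

(* Defs.v *)
From mathcomp Require Import all_boot all_order all_algebra.
Set Implicit Arguments. Unset Strict Implicit. Unset Printing Implicit Defensive.
Import Order.TTheory GRing.Theory Num.Theory.
Local Open Scope ring_scope.

Fixpoint lucas_pair (a b : int) (n : nat) : int * int :=
  match n with
  | 0%N => (0, 1)
  | n'.+1 => let xy := lucas_pair a b n' in (xy.2, a * xy.2 + b * xy.1)
  end.
Definition lucas (a b : int) (n : nat) : int := (lucas_pair a b n).1.
Definition fib (n : nat) : int := lucas 1 1 n.

Definition rank_of_appearance (L : nat -> int) (p al : nat) : Prop :=
  (0 < al)%N /\ (p%:Z %| L al)%Z /\
  forall m : nat, (0 < m < al)%N -> ~ (p%:Z %| L m)%Z.

Definition vp (p : nat) (q : rat) : int :=
  (logn p (absz (numq q)))%:Z - (logn p (absz (denq q)))%:Z.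

Definition padic_small (p k : nat) (q : rat) : Prop :=
  q = 0 \/ k%:Z <= vp p q.

(* Since Q is dense in Q_p and the
   closure of a union is the union of closures, this says: every p-adic ball
   centred at a rational meets one of the two sets. *)
Definition closures_union_is_Qp (L : nat -> int) (p s t : nat) : Prop :=
  forall (x : rat) (k : nat), exists n : nat,
    L n != 0 /\
    (padic_small p k ((L (n + s)%N)%:~R / (L n)%:~R - x) \/
     padic_small p k ((L (n + t)%N)%:~R / (L n)%:~R - x)).

(* ---------- the quadratic field Q(sqrt D): x + y sqrt D represented as (x, y) ---------- *)
Definition qmul (D : int) (z w : rat * rat) : rat * rat :=
  (z.1 * w.1 + D%:~R * z.2 * w.2, z.1 * w.2 + z.2 * w.1).
Definition qnorm (D : int) (z : rat * rat) : rat := z.1 ^+ 2 - D%:~R * z.2 ^+ 2.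
Definition qinv (D : int) (z : rat * rat) : rat * rat :=
  (z.1 / qnorm D z, - z.2 / qnorm D z).
Fixpoint qpow (D : int) (z : rat * rat) (n : nat) : rat * rat :=
  match n with 0%N => (1, 0) | n'.+1 => qmul D z (qpow D z n') end.
Definition qsub1 (z : rat * rat) : rat * rat := (z.1 - 1, z.2).

Definition lambda1 (a : int) : rat * rat := (a%:~R / 2, 1 / 2).
Definition lambda2 (a : int) : rat * rat := (a%:~R / 2, - (1 / 2)).

Definition pi_pow_divides (p : nat) (D : int) (k : nat) (z : rat * rat) : Prop :=
  let e := if (p%:Z %| D)%Z then 1%N else 2%N in
  qnorm D z = 0 \/ (k * e)%N%:Z <= vp p (qnorm D z).

Definition order_mod_pi (p : nat) (D : int) (u : rat * rat) (l : nat) : Prop :=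
  (0 < l)%N /\ pi_pow_divides p D 1 (qsub1 (qpow D u l)) /\
  forall m : nat, (0 < m < l)%N -> ~ pi_pow_divides p D 1 (qsub1 (qpow D u m)).

(* Main.v *)
Require Import Defs.
From mathcomp Require Import all_boot all_order all_algebra.
From mathcomp Require Import ring zify.
Import Order.TTheory GRing.Theory Num.Theory.
Local Open Scope ring_scope.


Lemma LS (a : int) n : lucas a 1 n.+2 = a * lucas a 1 n.+1 + lucas a 1 n.
Proof. by rewrite /lucas /= mul1r. Qed.

Lemma L0 a : lucas a 1 0 = 0. Proof. by []. Qed.
Lemma L1 a : lucas a 1 1 = 1. Proof. by []. Qed.

Lemma Ladd (a : int) k n :
  lucas a 1 (k + n.+1) = lucas a 1 k * lucas a 1 n + lucas a 1 k.+1 * lucas a 1 n.+1.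
Proof.
suff : forall n, (lucas a 1 (k + n.+1) = lucas a 1 k * lucas a 1 n + lucas a 1 k.+1 * lucas a 1 n.+1)
   /\ (lucas a 1 (k + n.+2) = lucas a 1 k * lucas a 1 n.+1 + lucas a 1 k.+1 * lucas a 1 n.+2).
  by move=> H; case: (H n).
elim=> [|m [IH1 IH2]].
  rewrite addn1 addn2 LS L0 L1 (LS a 0) L0 L1; split; ring.
split=> //.
have -> : (k + m.+3 = (k + m.+1).+2)%N by rewrite !addnS.
rewrite LS -addnS IH2 IH1.
rewrite !(LS a m.+1) (LS a m). ring.
Qed.

Lemma Lcassini (a : int) n :
  lucas a 1 n.+1 ^+ 2 - a * lucas a 1 n * lucas a 1 n.+1 - lucas a 1 n ^+ 2 = (-1) ^+ n.
Proof.
elim: n => [|n IH]; first by rewrite L0 L1 expr0; ring.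
rewrite LS [(-1) ^+ n.+1]exprS -IH; ring.
Qed.


Lemma Lshift (a : int) al k : (0 < al)%N ->
  lucas a 1 (k + al) = lucas a 1 al.-1 * lucas a 1 k + lucas a 1 al * lucas a 1 k.+1.
Proof.
case: al => // b _ /=; rewrite Ladd; ring.
Qed.

Lemma Lbin (a : int) al n r : (0 < al)%N ->
  lucas a 1 (n * al + r) = \sum_(i < n.+1)
     ('C(n, i)%:R * lucas a 1 al.-1 ^+ (n - i) * lucas a 1 al ^+ i * lucas a 1 (i + r)).
Proof.
move=> al0; set c := lucas a 1 al.-1; set t := lucas a 1 al.
elim: n r => [|n IH] r.
  by rewrite mul0n add0n big_ord_recl big_ord0 /= addr0 bin0 expr0 !mul1r.
have -> : (n.+1 * al + r = n * al + (r + al))%N by rewrite mulSn; lia.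
rewrite IH.
under eq_bigr => i _ do rewrite addnA Lshift // -/c -/t mulrDr.
rewrite big_split /=.
rewrite big_ord_recl /= [in RHS]big_ord_recl /=.
rewrite bin0 !subn0 !expr0 !mulr1 !mul1r.
under [in RHS]eq_bigr => i _ do rewrite binS natrD !mulrDl.
rewrite big_split /= addrA.
rewrite -!addrA; congr (_ + _); first by rewrite exprS; ring.
congr (_ + _); last first.
  apply: eq_bigr => i _; rewrite /bump /= add1n subSS exprS addSn; ring.
rewrite [in RHS]big_ord_recr /= bin_small // mul0r mul0r mul0r addr0.
apply: eq_bigr => i _; rewrite /bump /= add1n subSS exprS.
rewrite -(subnSK (ltn_ord i)) exprS; ring.
Qed.


Lemma lt_pow3 (p i : nat) : (3 <= p)%N -> (2 <= i)%N -> (i < p ^ i.-1)%N.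
Proof.
move=> p3; case: i => // [] [] // k _ /=.
have h1 := ltn_expl k (isT : (1 < 3)%N).
have h2 : (3 ^ k.+1 <= p ^ k.+1)%N by rewrite leq_exp2r.
rewrite expnS in h2. lia.
Qed.

Lemma bin_val (p j N i : nat) : prime p -> (3 <= p)%N -> (p ^ j %| N)%N -> (2 <= i)%N ->
  (p ^ j.+2 %| 'C(N, i) * p ^ i)%N.
Proof.
move=> pp p3 hN hi.
case: (ltnP N i) => hNi; first by rewrite bin_small // mul0n dvdn0.
have i0 : (0 < i)%N by lia.
have hdiag : (p ^ j %| i * 'C(N, i))%N.
  case: i hi i0 hNi => // i' _ _ hNi.
  rewrite -mul_bin_diag; exact: dvdn_mulr.
have [i' cpi' Ei] := pfactor_coprime pp i0.
set v := logn p i in Ei.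
have hv : (p ^ j %| p ^ v * 'C(N, i))%N.
  move: hdiag; rewrite Ei -mulnA Gauss_dvdr //.
  exact: coprimeXl.
have v2 : (v.+2 <= i)%N.
  have p1 : (1 < p)%N by lia.
  have h1 : (p ^ v <= i)%N by apply: dvdn_leq => //; rewrite /v pfactor_dvdnn.
  have h2 := lt_pow3 p i p3 hi.
  have : (p ^ v < p ^ i.-1)%N by lia.
  rewrite ltn_exp2l //; lia.
have -> : (p ^ i = p ^ (i - v.+2) * p ^ v.+2)%N by rewrite -expnD subnK.
rewrite mulnCA; apply: dvdn_mull.
rewrite -(addn2 j) -(addn2 v) !expnD mulnA [('C(N, i) * _)%N]mulnC.
by apply: dvdn_mul.
Qed.


Lemma LB1 (a : int) al n r (d : int) : (0 < al)%N -> (d %| lucas a 1 al)%Z ->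
  (d %| lucas a 1 (n * al + r) - lucas a 1 al.-1 ^+ n * lucas a 1 r)%Z.
Proof.
move=> al0 hd; rewrite Lbin // big_ord_recl /= bin0 subn0 expr0 mulr1 mul1r add0n.
rewrite addrC addKr; apply: rpred_sum => i _.
by rewrite /bump /= add1n exprS; apply: dvdz_mulr; apply: dvdz_mull; apply: dvdz_mulr.
Qed.

Lemma LB2 (a : int) al (p : nat) j n : prime p -> (3 <= p)%N -> (0 < al)%N ->
  (p%:Z %| lucas a 1 al)%Z -> (p ^ j %| n)%N ->
  ((p ^ j.+2)%N%:Z %| lucas a 1 (n * al) - n%:R * lucas a 1 al.-1 ^+ n.-1 * lucas a 1 al)%Z.
Proof.
move=> pp p3 al0 hp hn.
case: n hn => [|m] hn; first by rewrite mul0n L0 mul0r subr0 dvdz0.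
rewrite -[(m.+1 * al)%N]addn0 Lbin // big_ord_recl /= big_ord_recl /= L0 mulr0 add0r.
rewrite /bump /= bin1 subn1 /= expr1 L1 mulr1 addrC addKr.
apply: rpred_sum => i _.
rewrite !add1n addn0; apply: dvdz_mulr; rewrite mulrAC; apply: dvdz_mulr.
have h := bin_val p j m.+1 i.+2 pp p3 hn (isT : (2 <= i.+2)%N).
have e : ((('C(m.+1, i.+2) * p ^ i.+2)%N)%:Z = 'C(m.+1, i.+2)%:R * (p%:Z) ^+ i.+2).
  by rewrite PoszM -[Posz (p ^ i.+2)%N]natz natrX !natz.
apply: (@dvdz_trans (('C(m.+1, i.+2) * p ^ i.+2)%N)%:Z); first exact: h.
rewrite e; apply: dvdz_mul => //; exact: dvdz_exp2r.
Qed.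


Lemma solve_lin (p : nat) (u w : int) : prime p -> ~~ (p%:Z %| w)%Z ->
  exists2 s : nat, (s < p)%N & (p%:Z %| u + s%:Z * w)%Z.
Proof.
move=> pp hw.
have g1 : gcdz w p = 1%N.
  rewrite /gcdz /= gcdnC; apply/eqP. change (coprime p `|w|). by rewrite prime_coprime.
have [x [y Hxy]] := Bezoutz w p.
have {}Hxy : x * w + y * p%:Z = 1 by rewrite Hxy g1.
have p0 : (0 < p%:Z) by rewrite ltz_nat prime_gt0.
set s0 := - u * x.
exists `|(s0 %% p)%Z|%N.
  have := ltz_pmod s0 p0; have := modz_ge0 s0 (lt0r_neq0 p0).
  move=> h1 h2; rewrite -ltz_nat gez0_abs //.
rewrite gez0_abs ?modz_ge0 ?lt0r_neq0 //.
have -> : (s0 %% p)%Z = s0 - (s0 %/ p)%Z * p by rewrite {2}(divz_eq s0 p) addrC addKr.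
have -> : u + (s0 - (s0 %/ p)%Z * p) * w = (u * y - (s0 %/ p)%Z * w) * p.
  move: (s0 %/ p)%Z => q; rewrite /s0.
  apply/eqP; rewrite -subr_eq0; apply/eqP.
  transitivity (u * (1 - (x * w + y * p%:Z))); first by ring.
  by rewrite Hxy subrr mulr0.
exact: dvdz_mull (dvdzz _).
Qed.

Lemma Pexp (p k : nat) : ((p ^ k)%N)%:Z = (p%:Z) ^+ k.
Proof. by rewrite -[Posz (p ^ k)%N]natz natrX natz. Qed.

Lemma pdvdzM (p : nat) (x y : int) : prime p ->
  (p%:Z %| x * y)%Z = (p%:Z %| x)%Z || (p%:Z %| y)%Z.
Proof. move=> pp; rewrite !unfold_in /= abszM; exact: Euclid_dvdM. Qed.

Lemma pdvdzX (p : nat) (x : int) k : prime p ->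
  (p%:Z %| x ^+ k)%Z -> (p%:Z %| x)%Z.
Proof.
move=> pp; elim: k => [|k IH]; first by rewrite expr0 dvdz1 /= => /eqP p1; move: pp; rewrite p1.
by rewrite exprS pdvdzM // => /orP [] // /IH.
Qed.

Lemma Aadd (a : int) al m n : (0 < al)%N ->
  lucas a 1 ((m + n) * al) = lucas a 1 (m * al) * (lucas a 1 (n * al).+1 - a * lucas a 1 (n * al))
     + lucas a 1 (m * al).+1 * lucas a 1 (n * al).
Proof.
move=> al0; rewrite mulnDl.
case E: (n * al)%N => [|k]; first by rewrite addn0 L0 L1 mulr0 subr0 mulr1 mulr0 addr0.
rewrite Ladd LS; congr (_ + _); congr (_ * _); ring.
Qed.

Lemma Badd (a : int) al m n :
  lucas a 1 ((m + n) * al).+1 = lucas a 1 (m * al) * lucas a 1 (n * al)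
     + lucas a 1 (m * al).+1 * lucas a 1 (n * al).+1.
Proof. by rewrite mulnDl -addnS Ladd. Qed.


Definition Eerr (a : int) al (Y1 Y2 : int) m :=
  Y2 * lucas a 1 (m * al) - Y1 * lucas a 1 (m * al).+1.

Lemma Bunit (a : int) al (p : nat) m : prime p -> (0 < al)%N ->
  (p%:Z %| lucas a 1 al)%Z -> ~~ (p%:Z %| lucas a 1 al.-1)%Z ->
  ~~ (p%:Z %| lucas a 1 (m * al).+1)%Z.
Proof.
move=> pp al0 ht hc; apply/negP => hB.
have := LB1 a al m 1 p%:Z al0 ht; rewrite addn1 L1 mulr1 => h.
have : (p%:Z %| lucas a 1 al.-1 ^+ m)%Z.
  have -> : lucas a 1 al.-1 ^+ m = lucas a 1 (m * al).+1 - (lucas a 1 (m * al).+1 - lucas a 1 al.-1 ^+ m) by ring.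
  by rewrite rpredB.
by move/pdvdzX => /(_ pp); apply/negP.
Qed.

Lemma step (a : int) al (p : nat) (Y1 Y2 : int) j m :
  prime p -> (3 <= p)%N -> (0 < al)%N ->
  (p%:Z %| lucas a 1 al)%Z -> ~~ ((p ^ 2)%N%:Z %| lucas a 1 al)%Z ->
  ~~ (p%:Z %| lucas a 1 al.-1)%Z ->
  (p%:Z %| Y1)%Z -> ~~ (p%:Z %| Y2)%Z ->
  ((p ^ j.+1)%N%:Z %| Eerr a al Y1 Y2 m)%Z ->
  exists s : nat, ((p ^ j.+2)%N%:Z %| Eerr a al Y1 Y2 (m + p ^ j * s))%Z.
Proof.
move=> pp p3 al0 ht ht2 hc hY1 hY2 hE.
set c := lucas a 1 al.-1; set t := lucas a 1 al.
set A := lucas a 1 (m * al); set B := lucas a 1 (m * al).+1.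
have [tau Htau] := dvdzP ht.
have [e He] := dvdzP hE.
have [y1 Hy1] := dvdzP hY1.
have ntau : ~~ (p%:Z %| tau)%Z.
  apply: contra ht2 => /dvdzP [k Hk]; apply/dvdzP; exists k.
  by rewrite Pexp /t Htau Hk expr2 mulrA.
have hB : ~~ (p%:Z %| B)%Z by apply: Bunit.
have nw : ~~ (p%:Z %| tau * Y2 * B)%Z by rewrite !pdvdzM // !negb_or ntau hY2 hB.
have [s _ Hz] := solve_lin p (c * e) (tau * Y2 * B) pp nw.
move/dvdzP: Hz => [z Hz].
exists s.
case: s Hz => [|s'] Hz.
  rewrite muln0 addn0.
  move: Hz; rewrite mul0r addr0 => Hz.
  have : (p%:Z %| c * e)%Z by rewrite Hz dvdz_mull.
  rewrite pdvdzM // (negbTE hc) /= => /dvdzP [e' He'].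
  by apply/dvdzP; exists e'; rewrite He He' !Pexp -mulrA -exprS.
set n := (p ^ j * s'.+1)%N.
have n0 : (0 < n)%N by rewrite /n muln_gt0 expn_gt0 prime_gt0.
have [delta HD] := dvdzP (LB2 a al p j n pp p3 al0 ht (dvdn_mulr _ (dvdnn _))).
have [gam HC] := dvdzP (LB1 a al n 1 p%:Z al0 ht).
rewrite /Eerr Aadd // Badd -/A -/B.
rewrite /Eerr -/A -/B in He.
rewrite L1 mulr1 addn1 in HC.
move: HD HC; rewrite -/c -/t.
move: (lucas a 1 (n * al)) (lucas a 1 (n * al).+1) => Dn Cn1 HD HC.
have -> : Y2 * (A * (Cn1 - a * Dn) + B * Dn) - Y1 * (A * Dn + B * Cn1)
   = (Cn1 - a * Dn) * (Y2 * A - Y1 * B) + Dn * (Y2 * B - Y1 * (A + a * B)) by ring.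
rewrite He.
have eDn : Dn = (p%:Z) ^+ j * s'.+1%:R * c ^+ n.-1 * tau * p%:Z + delta * (p%:Z) ^+ j.+2.
  rewrite -[Dn](subrK (n%:R * c ^+ n.-1 * t)) HD /t Htau /n natrM !natz !Pexp; ring.
have eCn : Cn1 = c ^+ n.-1 * c + gam * p%:Z.
  by rewrite -[Cn1](subrK (c ^+ n)) HC -exprSr prednK // addrC.
rewrite eCn eDn Hy1 Pexp.
apply/dvdzP.
exists (c ^+ n.-1 * z + gam * e - a * e * (p%:Z) ^+ j * (s'.+1%:R * c ^+ n.-1 * tau + delta * p%:Z)
   + delta * Y2 * B - (s'.+1%:R * c ^+ n.-1 * tau + delta * p%:Z) * y1 * (A + a * B)).
apply/eqP; rewrite -subr_eq0; apply/eqP.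
transitivity (c ^+ n.-1 * (p%:Z) ^+ j.+1 * (c * e + s'.+1%:Z * (tau * Y2 * B) - z * p%:Z)).
  clearbody c t A B n; rewrite !Pexp !natz !exprS; ring.
by rewrite Hz subrr mulr0.
Qed.

Lemma key (a : int) al (p : nat) (Y1 Y2 : int) K :
  prime p -> (3 <= p)%N -> (0 < al)%N ->
  (p%:Z %| lucas a 1 al)%Z -> ~~ ((p ^ 2)%N%:Z %| lucas a 1 al)%Z ->
  ~~ (p%:Z %| lucas a 1 al.-1)%Z ->
  (p%:Z %| Y1)%Z -> ~~ (p%:Z %| Y2)%Z ->
  exists m, (0 < m)%N /\ ((p ^ K)%N%:Z %| Eerr a al Y1 Y2 m)%Z.
Proof.
move=> pp p3 al0 ht ht2 hc hY1 hY2.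
suff H : forall j, exists m, (0 < m)%N /\ ((p ^ j.+1)%N%:Z %| Eerr a al Y1 Y2 m)%Z.
  case: K => [|j]; last exact: H.
  by exists 1%N; split => //; rewrite expn0 dvd1z.
elim=> [|j [m [m0 hm]]].
  exists 1%N; split => //; rewrite expn1 /Eerr mul1n.
  by apply: rpredB; [exact: dvdz_mull | exact: dvdz_mulr].
have [s hs] := step a al p Y1 Y2 j m pp p3 al0 ht ht2 hc hY1 hY2 hm.
by exists (m + p ^ j * s)%N; split => //; rewrite addn_gt0 m0.
Qed.


Lemma Lneg (a : int) n : lucas (- a) 1 n = (-1) ^+ n.+1 * lucas a 1 n.
Proof.
suff H : forall n, lucas (- a) 1 n = (-1) ^+ n.+1 * lucas a 1 n /\
                  lucas (- a) 1 n.+1 = (-1) ^+ n.+2 * lucas a 1 n.+1 by case: (H n).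
elim=> [|k [IH1 IH2]]; first by rewrite !L0 !L1 mulr0 expr2 mulrNN !mul1r.
split=> //; rewrite LS IH1 IH2 LS !exprS; ring.
Qed.

Lemma Lpos (a : int) n : 0 < a -> 0 < lucas a 1 n.+1.
Proof.
move=> a0.
suff H : forall n, 0 <= lucas a 1 n /\ 0 < lucas a 1 n.+1 by case: (H n).
elim=> [|k [IH1 IH2]]; first by rewrite L0 L1.
split; first exact: ltW.
by rewrite LS ltr_wpDr // mulr_gt0.
Qed.

Lemma Lnz (a : int) n : a != 0 -> (0 < n)%N -> lucas a 1 n != 0.
Proof.
move=> a0; case: n => // n _.
case: (ltrgt0P a) a0 => // ha _; first by rewrite gt_eqF // Lpos.
rewrite -[a]opprK Lneg mulf_eq0 negb_or signr_eq0 /=.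
by rewrite gt_eqF // Lpos // oppr_gt0.
Qed.

Lemma int_pdecomp (p : nat) (z : int) : prime p -> z != 0 ->
  exists2 z' : int, ~~ (p%:Z %| z')%Z & z = z' * (p%:Z) ^+ (logn p `|z|).
Proof.
move=> pp z0.
have hz : (0 < `|z|)%N by rewrite absz_gt0.
have [m cm Em] := pfactor_coprime pp hz.
exists ((-1) ^+ (z < 0)%R * m%:Z).
  by rewrite /dvdz unfold_in abszMsign /= -prime_coprime.
by rewrite -mulrA -Pexp -PoszM -Em mulz_sign_abs.
Qed.

Lemma dvdz_logn (p K : nat) (z : int) : prime p -> z != 0 ->
  ((p ^ K)%N%:Z %| z)%Z -> (K <= logn p `|z|)%N.
Proof.
move=> pp z0; rewrite unfold_in /= -pfactor_dvdn //; by rewrite absz_gt0.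
Qed.

Lemma small_of (p k : nat) (q : rat) (N Dn : int) : prime p -> Dn != 0 ->
  q * Dn%:~R = N%:~R -> (N = 0 \/ (k + logn p `|Dn|)%N <= logn p `|N|)%N ->
  padic_small p k q.
Proof.
move=> pp D0 hq [N0|hl].
  left; move: hq; rewrite N0 => /eqP; rewrite mulf_eq0 intr_eq0 (negbTE D0) orbF.
  by move/eqP.
case: (eqVneq q 0) => [->|q0]; first by left.
right; rewrite /vp.
have N0 : N != 0.
  apply/negP => /eqP N0; move: hq; rewrite N0 => /eqP.
  by rewrite mulf_eq0 intr_eq0 (negbTE D0) orbF (negbTE q0).
have e : numq q * Dn = N * denq q.
  apply/eqP; rewrite -(eqr_int rat) !intrM numqE -hq; apply/eqP; ring.
have e2 : (`|numq q| * `|Dn| = `|N| * `|denq q|)%N by rewrite -!abszM e.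
have nq : numq q != 0 by rewrite numq_eq0.
have dq : denq q != 0 by rewrite denq_eq0.
have := congr1 (logn p) e2.
rewrite !lognM ?absz_gt0 // => e3.
move: hl; lia.
Qed.


Lemma notp_unit (p : nat) n : prime p -> ~~ (p%:Z %| (-1) ^+ n)%Z.
Proof.
move=> pp; apply/negP => /(pdvdzX p (-1) n pp).
by rewrite unfold_in /= dvdn1 => /eqP p1; move: pp; rewrite p1.
Qed.

Lemma hc_lem (a : int) al (p : nat) : prime p -> (0 < al)%N ->
  (p%:Z %| lucas a 1 al)%Z -> ~~ (p%:Z %| lucas a 1 al.-1)%Z.
Proof.
move=> pp al0 ht; apply/negP => hc.
have := Lcassini a al.-1; rewrite prednK // => e.
have : (p%:Z %| (-1) ^+ al.-1)%Z.
  rewrite -e; apply: rpredB; first apply: rpredB.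
  - by rewrite expr2 dvdz_mull.
  - by rewrite -mulrA dvdz_mull // dvdz_mulr.
  - by rewrite expr2 dvdz_mull.
by apply/negP; apply: notp_unit.
Qed.

Lemma q_eq (x : rat) (u v : int) : v != 0 ->
  (u%:~R / v%:~R - x) * (denq x * v)%:~R = (denq x * u - numq x * v)%:~R :> rat.
Proof.
move=> v0; rewrite !intrM intrB !intrM numqE.
have v0' : (v%:~R : rat) != 0 by rewrite intr_eq0.
field. exact: v0'.
Qed.

Lemma logn_unit (p : nat) (z : int) : prime p -> ~~ (p%:Z %| z)%Z -> logn p `|z| = 0%N.
Proof.
move=> pp hz; apply: logn_coprime; rewrite prime_coprime //.
Qed.

Lemma sub2S al : (2 < al)%N -> (al - 2).+1 = al.-1.
Proof. lia. Qed.

Lemma arithA k f f1 lA lN : (f1 <= f)%N -> (lA <= (f - f1).+1)%N ->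
  (k + f.*2 + 2 + f1 <= lN)%N -> (k + (f + lA) <= lN)%N.
Proof. lia. Qed.

Lemma arithB k f f1 : ((f - f1).+2 <= k + f.*2 + 2)%N.
Proof. lia. Qed.

Lemma ntau_lem (p : nat) (t tau : int) : ~~ ((p ^ 2)%N%:Z %| t)%Z -> t = tau * p%:Z ->
  ~~ (p%:Z %| tau)%Z.
Proof.
move=> ht2 Htau; apply: contra ht2 => /dvdzP [k Hk]; apply/dvdzP; exists k.
by rewrite Pexp Htau Hk expr2 mulrA.
Qed.

Lemma main_gen (a : int) (p al : nat) : a != 0 -> prime p -> (3 <= p)%N ->
  rank_of_appearance (lucas a 1) p al -> (2 < al)%N ->
  ~~ ((p ^ 2)%N%:Z %| lucas a 1 al)%Z ->
  closures_union_is_Qp (lucas a 1) p al (al - 2)%N.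
Proof.
move=> a0 pp p3 [al0 [ht hmin]] al2 ht2 x k.
have hc := hc_lem a al p pp al0 ht.
have hd2 : ~~ (p%:Z %| lucas a 1 (al - 2))%Z.
  by apply/negP; apply: hmin; apply/andP; split; lia.
have Y0 : denq x != 0 by rewrite denq_neq0.
have [Y' hY' EY] := int_pdecomp p (denq x) pp Y0.
move: EY; set f := logn p `|denq x| => EY.
set Z1 := numq x - lucas a 1 al.-1 * denq x.
case: (boolP (((p ^ f.+1)%N)%:Z %| Z1)%Z) => hZ.
- have [W HW] := dvdzP hZ.
  have nY2 : ~~ (p%:Z %| Y' * lucas a 1 (al - 2))%Z by rewrite pdvdzM // negb_or hY' hd2.
  have [m [m0 hm]] := key a al p (W * p%:Z) (Y' * lucas a 1 (al - 2)) k pp p3 al0 ht ht2 hc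
     (dvdz_mull _ (dvdzz _)) nY2.
  have [e He] := dvdzP hm.
  have n0 : lucas a 1 (m * al).+1 != 0 by apply: Lnz.
  exists (m * al).+1; split => //; right.
  have hq := q_eq x (lucas a 1 ((m * al).+1 + (al - 2))) _ n0.
  apply: (small_of p k _ _ _ pp _ hq).
    by rewrite mulf_eq0 negb_or Y0 n0.
  have hN : denq x * lucas a 1 ((m * al).+1 + (al - 2)) - numq x * lucas a 1 (m * al).+1
          = e * (p%:Z) ^+ (k + f).
    have -> : ((m * al).+1 + (al - 2) = m * al + (al - 2).+1)%N by rewrite addSnnS.
    rewrite Ladd.
    rewrite (sub2S al al2).
    have -> : numq x = Z1 + lucas a 1 al.-1 * denq x by rewrite /Z1 subrK.
    transitivity (Eerr a al (W * p%:Z) (Y' * lucas a 1 (al - 2)) m * (p%:Z) ^+ f).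
      rewrite HW EY /Eerr !Pexp exprS; ring.
    by rewrite He Pexp exprD mulrA.
  rewrite hN.
  case: (eqVneq e 0) => [->|e0]; first by left; rewrite mul0r.
  right.
  have hB := Bunit a al p m pp al0 ht hc.
  rewrite abszM lognM ?absz_gt0 // -/f (logn_unit p _ pp hB) addn0.
  apply: dvdz_logn => //.
    have pz : p%:Z != 0 by rewrite eqz_nat -lt0n prime_gt0.
    by rewrite mulf_eq0 negb_or e0 expf_neq0.
  by rewrite Pexp dvdz_mull.
have Z0 : Z1 != 0 by apply: contraNneq hZ => ->; exact: dvdz0.
have [Z' hZ' EZ] := int_pdecomp p Z1 pp Z0.
move: EZ; set f1 := logn p `|Z1| => EZ.
have f1f : (f1 <= f)%N.
  rewrite leqNgt; apply: contra hZ => h.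
  by rewrite unfold_in /= pfactor_dvdn ?absz_gt0.
have [tau Htau] := dvdzP ht.
set Y1 := lucas a 1 al * Y' * (p%:Z) ^+ (f - f1).
have hY1 : (p%:Z %| Y1)%Z by rewrite /Y1 -mulrA dvdz_mulr.
set K := (k + f.*2 + 2)%N.
have [m [m0 hm]] := key a al p Y1 Z' K pp p3 al0 ht ht2 hc hY1 hZ'.
have [e He] := dvdzP hm.
have A0 : lucas a 1 (m * al) != 0 by apply: Lnz; rewrite // muln_gt0 m0.
exists (m * al); split => //; left.
have hq := q_eq x (lucas a 1 (m * al + al)) _ A0.
apply: (small_of p k _ _ _ pp _ hq); first by rewrite mulf_eq0 negb_or Y0 A0.
have hN : denq x * lucas a 1 (m * al + al) - numq x * lucas a 1 (m * al)
     = - (e * (p%:Z) ^+ (K + f1)).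
  rewrite Lshift //.
  have -> : numq x = Z1 + lucas a 1 al.-1 * denq x by rewrite /Z1 subrK.
  transitivity (- (Eerr a al Y1 Z' m * (p%:Z) ^+ f1)).
    have ef : p%:Z ^+ f = p%:Z ^+ f1 * p%:Z ^+ (f - f1) by rewrite -exprD subnKC.
    rewrite EZ EY /Eerr /Y1 ef; ring.
  by rewrite He Pexp exprD mulrA.
rewrite hN.
case: (eqVneq e 0) => [->|e0]; first by left; rewrite mul0r oppr0.
right.
have pz : p%:Z != 0 by rewrite eqz_nat -lt0n prime_gt0.
have hlN : (K + f1 <= logn p `|- (e * p%:Z ^+ (K + f1))|)%N.
  apply: dvdz_logn => //; first by rewrite oppr_eq0 mulf_eq0 negb_or e0 expf_neq0.
  by rewrite Pexp rpredN dvdz_mull.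
have hlA : (logn p `|lucas a 1 (m * al)| <= (f - f1).+1)%N.
  rewrite leqNgt; apply/negP => hA.
  have dA : (((p ^ (f - f1).+2)%N)%:Z %| lucas a 1 (m * al))%Z.
    by rewrite unfold_in /= pfactor_dvdn ?absz_gt0.
  have dE : (((p ^ (f - f1).+2)%N)%:Z %| Eerr a al Y1 Z' m)%Z.
    apply: dvdz_trans hm; rewrite unfold_in /= dvdn_exp2l //; exact: arithB.
  have : (((p ^ (f - f1).+2)%N)%:Z %| Y1 * lucas a 1 (m * al).+1)%Z.
    have -> : Y1 * lucas a 1 (m * al).+1 = Z' * lucas a 1 (m * al) - Eerr a al Y1 Z' m.
      by rewrite /Eerr; ring.
    by rewrite rpredB // dvdz_mull.
  rewrite /Y1 Htau Pexp.
  have -> : tau * p%:Z * Y' * p%:Z ^+ (f - f1) * lucas a 1 (m * al).+1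
     = (tau * Y' * lucas a 1 (m * al).+1) * p%:Z ^+ (f - f1).+1 by rewrite exprS; ring.
  rewrite [p%:Z ^+ (f - f1).+2]exprS dvdz_mul2r ?expf_neq0 //.
  apply/negP; rewrite !pdvdzM // !negb_or (ntau_lem p _ _ ht2 Htau) hY'.
  exact: Bunit.
rewrite abszM lognM ?absz_gt0 // -/f.
exact: arithA f1f hlA hlN.
Qed.


Definition uu (a : int) := qmul (a ^+ 2 + 4) (lambda2 a) (qinv (a ^+ 2 + 4) (lambda1 a)).

Lemma uuE (a : int) : uu a = (- ((a%:~R) ^+ 2 + 2) / 2, a%:~R / 2).
Proof.
rewrite /uu /qmul /qinv /qnorm /lambda1 /lambda2 /=.
rewrite intrD rmorphXn /=.
have -> : (a%:~R / 2) ^+ 2 - (a%:~R ^+ 2 + 4%:~R) * (1 / 2) ^+ 2 = -1 :> rat by field.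
by congr (_, _); field.
Qed.

Lemma cass_rat (a : int) m :
  let A := (a%:~R : rat) in let L := (lucas a 1 m)%:~R in let L' := (lucas a 1 m.+1)%:~R in
  L' ^+ 2 - A * L * L' - L ^+ 2 = (-1) ^+ m :> rat.
Proof.
move=> A L L'.
transitivity (((lucas a 1 m.+1 ^+ 2 - a * lucas a 1 m * lucas a 1 m.+1 - lucas a 1 m ^+ 2 : int))%:~R : rat).
  by rewrite !rmorphB /= !rmorphM /= /A /L /L' !expr2.
have e := Lcassini a m.
have -> : (lucas a 1 m.+1 ^+ 2 - a * lucas a 1 m * lucas a 1 m.+1 - lucas a 1 m ^+ 2) = (-1) ^+ m :> int by exact: e.
by rewrite rmorphXn /= rmorphN1.
Qed.

Lemma upowE (a : int) m :
  qpow (a ^+ 2 + 4) (uu a) m =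
  (1 + (-1) ^+ m * ((a%:~R) ^+ 2 + 4) * (lucas a 1 m)%:~R ^+ 2 / 2,
   - ((-1) ^+ m * (lucas a 1 m)%:~R * ((lucas a 1 m.+1)%:~R - a%:~R * (lucas a 1 m)%:~R / 2))).
Proof.
elim: m => [|m IH].
  rewrite /= L0 L1 /=; congr (_, _); ring.
rewrite [qpow _ _ _.+1]/= IH uuE /qmul /= intrD rmorphXn /=.
have hc := cass_rat a m; move: hc => /=.
rewrite LS (intrD _ (a * lucas a 1 m.+1)) (intrM _ a) [(-1) ^+ m.+1]exprS => hc.
have hs : ((-1) ^+ m : rat) ^+ 2 = 1 by rewrite -exprM mulnC exprM sqrrN expr1n.
move: hc hs; move: ((-1) ^+ m : rat) => s.
move: (a%:~R : rat) ((lucas a 1 m)%:~R : rat) ((lucas a 1 m.+1)%:~R : rat) => A L L' hc hs.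
have e4 : (4%:~R : rat) = 4 by [].
rewrite e4.
congr (_, _).
  apply/eqP; rewrite -subr_eq0; apply/eqP.
  transitivity (s * (A ^+ 2 + 4) / 2 * ((L' ^+ 2 - A * L * L' - L ^+ 2) - s) + (A ^+ 2 + 4) / 2 * (s ^+ 2 - 1)).
    by field.
  by rewrite hc hs !subrr !mulr0 addr0.
apply/eqP; rewrite -subr_eq0; apply/eqP.
transitivity (- (s * A / 2) * ((L' ^+ 2 - A * L * L' - L ^+ 2) - s) - A / 2 * (s ^+ 2 - 1)).
  by field.
by rewrite hc hs !subrr !mulr0 subr0.
Qed.

Lemma unormE (a : int) m :
  qnorm (a ^+ 2 + 4) (qsub1 (qpow (a ^+ 2 + 4) (uu a) m)) =
  ((- ((-1) ^+ m * (a ^+ 2 + 4) * lucas a 1 m ^+ 2)) : int)%:~R.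
Proof.
rewrite upowE /qsub1 /qnorm /=.
rewrite rmorphN /= !rmorphM /= !rmorphXn /= rmorphN1 intrD rmorphXn /=.
have hc := cass_rat a m; move: hc => /=.
have hs : ((-1) ^+ m : rat) ^+ 2 = 1 by rewrite -exprM mulnC exprM sqrrN expr1n.
move: hs; move: ((-1) ^+ m : rat) => s.
move: (a%:~R : rat) ((lucas a 1 m)%:~R : rat) ((lucas a 1 m.+1)%:~R : rat) => A L L' hs hc.
have e4 : (4%:~R : rat) = 4 by [].
rewrite e4.
apply/eqP; rewrite -subr_eq0; apply/eqP.
transitivity (- (s ^+ 2 * (A ^+ 2 + 4) * L ^+ 2) * ((L' ^+ 2 - A * L * L' - L ^+ 2) - s)
              - s * (A ^+ 2 + 4) * L ^+ 2 * (s ^+ 2 - 1)).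
  by field.
by rewrite hc hs !subrr !mulr0 subr0.
Qed.


Lemma vp_int (p : nat) (z : int) : vp p (z%:~R) = (logn p `|z|)%:Z.
Proof. by rewrite /vp numq_int denq_int /= logn1 subr0. Qed.

Lemma lognQ (p : nat) m (D L : int) : prime p -> D != 0 -> L != 0 ->
  logn p `|- ((-1) ^+ m * D * L ^+ 2)| = (logn p `|D| + 2 * logn p `|L|)%N.
Proof.
move=> pp D0 L0.
rewrite abszN -mulrA abszMsign abszM abszX lognM ?lognX 1?mulnC //.
- by rewrite absz_gt0.
- by rewrite expn_gt0 absz_gt0 L0.
Qed.

Lemma D_nz (a : int) : a ^+ 2 + 4 != 0 :> int.
Proof. by rewrite gt_eqF // ltr_wpDl // sqr_ge0. Qed.

Lemma unram (a : int) (p al : nat) : a != 0 -> prime p ->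
  rank_of_appearance (lucas a 1) p al -> ~~ (p%:Z %| a ^+ 2 + 4)%Z ->
  (forall l : nat, order_mod_pi p (a ^+ 2 + 4) (uu a) l ->
     ~ pi_pow_divides p (a ^+ 2 + 4) 2 (qsub1 (qpow (a ^+ 2 + 4) (uu a) l))) ->
  ~~ ((p ^ 2)%N%:Z %| lucas a 1 al)%Z.
Proof.
move=> a0 pp [al0 [ht hmin]] hD H.
have lD : logn p `|a ^+ 2 + 4| = 0%N by apply: logn_unit.
have Lal0 : lucas a 1 al != 0 by apply: Lnz.
have := H al; rewrite /pi_pow_divides /order_mod_pi (negbTE hD) unormE vp_int.
rewrite lognQ // ?D_nz // lD add0n.
have l1 : (1 <= logn p `|lucas a 1 al|)%N.
  by rewrite -pfactor_dvdn ?absz_gt0 // expn1.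
move=> H1.
have : ~ ((- ((-1) ^+ al * (a ^+ 2 + 4) * lucas a 1 al ^+ 2))%:~R = (0 : rat) \/
       ((2 * 2)%N%:Z <= (2 * logn p `|lucas a 1 al|)%N%:Z)).
  apply: H1; split => //; split.
    right; rewrite (negbTE hD) unormE vp_int lognQ ?D_nz // lD add0n.
    by rewrite mul1n lez_nat; move: l1; clear; lia.
  move=> m hm.
  have hLm : lucas a 1 m != 0 by apply: Lnz => //; case/andP: hm.
  rewrite /pi_pow_divides (negbTE hD) unormE vp_int lognQ ?D_nz // lD add0n.
  have -> : logn p `|lucas a 1 m| = 0%N.
    by apply: logn_unit => //; apply/negP; apply: hmin.
  move=> [].
    move/eqP; rewrite intr_eq0 oppr_eq0 !mulf_eq0 signr_eq0 (negbTE (D_nz a)) /=.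
    by rewrite (negbTE hLm).
  by [].
move=> H2; apply/negP => h2; apply: H2; right.
rewrite lez_nat leq_mul2l /=.
by rewrite -pfactor_dvdn ?absz_gt0.
Qed.


Lemma bin3S n : ('C(n.+2, 3)%:R : int) = 2 * 'C(n.+1, 3)%:R + n%:R - 'C(n, 3)%:R.
Proof.
have h1 : 'C(n.+2, 3) = ('C(n.+1, 3) + 'C(n.+1, 2))%N by rewrite binS.
have h2 : 'C(n.+1, 3) = ('C(n, 3) + 'C(n, 2))%N by rewrite binS.
have h3 : 'C(n.+1, 2) = ('C(n, 2) + 'C(n, 1))%N by rewrite binS.
rewrite h1 h3 bin1 h2 !natrD; ring.
Qed.

Lemma ram_inv (a : int) n : exists Q : int,
  2 ^+ n * a ^+ 3 * lucas a 1 n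
    - 2 * (n%:R * a ^+ n.+2 + 'C(n, 3)%:R * a ^+ n * (a ^+ 2 + 4)) = Q * (a ^+ 2 + 4) ^+ 2.
Proof.
suff H : forall n, (exists Q : int, 2 ^+ n * a ^+ 3 * lucas a 1 n
    - 2 * (n%:R * a ^+ n.+2 + 'C(n, 3)%:R * a ^+ n * (a ^+ 2 + 4)) = Q * (a ^+ 2 + 4) ^+ 2)
  /\ (exists Q : int, 2 ^+ n.+1 * a ^+ 3 * lucas a 1 n.+1
    - 2 * (n.+1%:R * a ^+ n.+3 + 'C(n.+1, 3)%:R * a ^+ n.+1 * (a ^+ 2 + 4)) = Q * (a ^+ 2 + 4) ^+ 2).
  by case: (H n).
elim=> [|k [[Q1 H1] [Q2 H2]]].
  split; exists 0; rewrite ?L0 ?L1 bin_small //=; ring.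
split; first by exists Q2.
exists (2 * a * Q2 + 4 * Q1 + 2 * 'C(k, 3)%:R * a ^+ k).
rewrite LS bin3S.
have e1 : 2 ^+ k.+1 * a ^+ 3 * lucas a 1 k.+1 =
   Q2 * (a ^+ 2 + 4) ^+ 2 + 2 * (k.+1%:R * a ^+ k.+3 + 'C(k.+1, 3)%:R * a ^+ k.+1 * (a ^+ 2 + 4)).
  by rewrite -H2 subrK.
have e0 : 2 ^+ k * a ^+ 3 * lucas a 1 k =
   Q1 * (a ^+ 2 + 4) ^+ 2 + 2 * (k%:R * a ^+ k.+2 + 'C(k, 3)%:R * a ^+ k * (a ^+ 2 + 4)).
  by rewrite -H1 subrK.
have -> : 2 ^+ k.+2 * a ^+ 3 * (a * lucas a 1 k.+1 + lucas a 1 k)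
   = 2 * a * (2 ^+ k.+1 * a ^+ 3 * lucas a 1 k.+1) + 4 * (2 ^+ k * a ^+ 3 * lucas a 1 k).
  by rewrite !exprS; ring.
rewrite e1 e0 !exprS !mulrS; ring.
Qed.

Lemma not3 (a : int) : ~~ (3%:Z %| a ^+ 2 + 4)%Z.
Proof.
apply/negP => h.
have e := divz_eq a 3.
have r0 := modz_ge0 a (isT : (3 : int) != 0).
have r3 := ltz_pmod a (isT : (0 : int) < 3).
move: h r0 r3 e; move: (a %/ 3)%Z (a %% 3)%Z => q r h r0 r3 e.
have : (3%:Z %| r ^+ 2 + 4)%Z.
  have -> : r ^+ 2 + 4 = (a ^+ 2 + 4) - (3 * q ^+ 2 + 2 * q * r) * 3 by rewrite e; ring.
  by rewrite rpredB // dvdz_mull.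
case: r r0 r3 {e} => [[|[|[|r]]]|r] //.
Qed.

Lemma ram (a : int) (p al : nat) : prime p -> (3 <= p)%N ->
  rank_of_appearance (lucas a 1) p al -> (p%:Z %| a ^+ 2 + 4)%Z ->
  ~~ ((p ^ 2)%N%:Z %| lucas a 1 al)%Z.
Proof.
move=> pp p3 [al0 [ht hmin]] hD.
have p4 : (3 < p)%N.
  rewrite ltn_neqAle p3 andbT; apply/eqP => e.
  by move: hD; rewrite -e (negbTE (not3 a)).
have pz : p%:Z != 0 by rewrite eqz_nat -lt0n prime_gt0.
have small_nd : forall n : nat, (0 < n < p)%N -> ~~ (p%:Z %| n%:R)%Z.
  move=> n /andP [n0 np]; rewrite natz unfold_in /=; apply/negP => /dvdn_leq.
  by move=> /(_ n0); rewrite leqNgt np.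
have p2 : ~~ (p%:Z %| 2)%Z.
  rewrite unfold_in /=; apply/negP => /(dvdn_leq (isT : (0 < 2)%N)) h.
  by move: p4 h; clear; lia.
have pa : ~~ (p%:Z %| a)%Z.
  apply/negP => ha.
  have : (p%:Z %| (a ^+ 2 + 4) - a * a)%Z by rewrite rpredB // dvdz_mull.
  have -> : (a ^+ 2 + 4) - a * a = 2 * 2 by ring.
  by rewrite pdvdzM // orbb (negbTE p2).
have hsmall : forall n : nat, (0 < n < p)%N -> ~~ (p%:Z %| lucas a 1 n)%Z.
  move=> n hn; apply/negP => hL.
  have [Q HQ] := ram_inv a n.
  have : (p%:Z %| 2 * n%:R * a ^+ n.+2)%Z.
    have -> : 2 * n%:R * a ^+ n.+2 = 2 ^+ n * a ^+ 3 * lucas a 1 n - Q * (a ^+ 2 + 4) ^+ 2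
        - 2 * 'C(n, 3)%:R * a ^+ n * (a ^+ 2 + 4).
      by rewrite -[2 ^+ n * _ * _](subrK (2 * (n%:R * a ^+ n.+2 + 'C(n, 3)%:R * a ^+ n * (a ^+ 2 + 4)))) HQ; ring.
    by rewrite !rpredB // ?dvdz_mull // expr2 dvdz_mull.
  rewrite pdvdzM // pdvdzM // (negbTE p2) (negbTE (small_nd n hn)) /=.
  by move/(pdvdzX p a _ pp) => ha; rewrite ha in pa.
have hLp : (p%:Z %| lucas a 1 p)%Z.
  have [Q HQ] := ram_inv a p.
  have : (p%:Z %| 2 ^+ p * a ^+ 3 * lucas a 1 p)%Z.
    rewrite -[2 ^+ p * _ * _](subrK (2 * (p%:R * a ^+ p.+2 + 'C(p, 3)%:R * a ^+ p * (a ^+ 2 + 4)))) HQ.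
    apply: rpredD; last first.
      apply: dvdz_mull; apply: rpredD; first by rewrite natz dvdz_mulr.
      exact: dvdz_mull.
    by rewrite expr2 !dvdz_mull.
  rewrite pdvdzM // => /orP [|] //.
  rewrite pdvdzM // => /orP [].
    by move/(pdvdzX p 2 _ pp) => h; rewrite h in p2.
  by move/(pdvdzX p a _ pp) => h; rewrite h in pa.
have alp : al = p.
  apply/eqP; rewrite eqn_leq; apply/andP; split.
    rewrite leqNgt; apply/negP => h; apply: (hmin p) => //.
    by rewrite prime_gt0.
  rewrite leqNgt; apply/negP => h.
  by move: ht; apply/negP; apply: hsmall; rewrite al0.
subst al.
apply/negP => h2.
have [Q HQ] := ram_inv a p.
have hC : (p %| 'C(p, 3))%N by apply: prime_dvd_bin => //; rewrite /= (leq_trans _ p4).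
have : ((p%:Z * p%:Z) %| 2 * p%:R * a ^+ p.+2)%Z.
  have -> : 2 * p%:R * a ^+ p.+2 = 2 ^+ p * a ^+ 3 * lucas a 1 p - Q * (a ^+ 2 + 4) ^+ 2
      - 2 * 'C(p, 3)%:R * a ^+ p * (a ^+ 2 + 4).
    by rewrite -[2 ^+ p * _ * _](subrK (2 * (p%:R * a ^+ p.+2 + 'C(p, 3)%:R * a ^+ p * (a ^+ 2 + 4)))) HQ; ring.
  rewrite !rpredB //.
  - by move: h2; rewrite Pexp expr2 => h2; rewrite dvdz_mull.
  - by rewrite dvdz_mull // expr2 dvdz_mul.
  - have -> : 2 * 'C(p, 3)%:R * a ^+ p * (a ^+ 2 + 4)
        = ('C(p, 3)%:R * (a ^+ 2 + 4)) * (2 * a ^+ p) by ring.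
    apply: dvdz_mulr; apply: dvdz_mul => //.
    by rewrite natz unfold_in /=.
have -> : 2 * p%:R * a ^+ p.+2 = (2 * a ^+ p.+2) * p%:Z by rewrite natz; ring.
rewrite dvdz_mul2r //.
rewrite pdvdzM // (negbTE p2) /=.
by move/(pdvdzX p a _ pp) => ha; rewrite ha in pa.
Qed.


Theorem theorem5 :
  (forall (a : int) (p al : nat),
     a != 0 -> prime p -> (3 <= p)%N ->
     rank_of_appearance (lucas a 1) p al -> (2 < al)%N ->
     let D : int := a ^+ 2 + 4 in
     let u := qmul D (lambda2 a) (qinv D (lambda1 a)) in
     ((p ^ 2)%N%:Z %| D)%Z \/
       (forall l : nat, order_mod_pi p D u l ->
          ~ pi_pow_divides p D 2 (qsub1 (qpow D u l))) ->
     closures_union_is_Qp (lucas a 1) p al (al - 2)%N)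
  /\
  (forall (p al : nat),
     prime p -> (3 <= p)%N ->
     rank_of_appearance fib p al ->
     ~ ((p ^ 2)%N%:Z %| fib al)%Z ->
     closures_union_is_Qp fib p al (al - 2)%N).
Proof.
split.
  move=> a p al a0 pp p3 hr al2 D u H.
  apply: main_gen => //.
  case: (boolP (p%:Z %| D)%Z) => hD.
    exact: (ram a p al pp p3 hr hD).
  case: H => [h|h].
    exfalso; move/negP: hD; apply; apply: dvdz_trans h.
    by rewrite Pexp expr2 dvdz_mulr.
  exact: (unram a p al a0 pp hr hD h).
move=> p al pp p3 hr hn.
have al2 : (2 < al)%N.
  case: hr => al0 [ht _].
  case: al al0 ht {hn} => [|[|[|al]]] // _.
    by rewrite /fib L1 dvdz1 /= => /eqP p1; move: pp; rewrite p1.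
  by rewrite /fib LS L1 L0 mulr1 addr0 dvdz1 /= => /eqP p1; move: pp; rewrite p1.
apply: main_gen => //; apply/negP; exact: hn.
Qed.
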